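(* Let $p_0$ be a probability density w.r.t. a $\sigma$-finite measure $\pi$ on $(\mathcal X,\mathcal B)$, $\mathbb P_0(B):=\int_Bp_0\,d\pi$, and $Q:\mathcal X\to(0,\infty)$ measurable with $Q_*:=\operatorname*{ess\,sup}_\pi Q\in(0,\infty)$, $Q\le Q_*$ everywhere, and $\mathbb P_0(A)>0$ where $A=\{Q=Q_*\}$. Fix $\eta>0$ and suppose there exists $\delta>0$ with $$\mathbb P_0\bigl(\{x:Q_*-\delta\le Q(x)<Q_*\}\bigr)>0\quad\text{and}\quad (Q_*-\delta)e^\eta\ge Q_*.$$ Then there exists a measurable $\Delta r$ with $\|\Delta r\|_\infty=\eta$ such that $\mathbb P_0(A_{\Delta r})>0$ and $d_{\rm TV}(p_{\infty,\Delta r},p_{\infty,0})=1$.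
   Context: For $\Delta r\in L^\infty(\pi)$: $Q_{\Delta r}(x):=Q(x)e^{\Delta r(x)}$, $Q_{*,\Delta r}:=\operatorname*{ess\,sup}_\pi Q_{\Delta r}$, $A_{\Delta r}:=\{x:Q_{\Delta r}(x)=Q_{*,\Delta r}\}$, and, when $\mathbb P_0(A_{\Delta r})>0$, $p_{\infty,\Delta r}(x):=p_0(x)\mathbf 1_{A_{\Delta r}}(x)/\mathbb P_0(A_{\Delta r})$ (with $A_0=A$). In the paper $Q(x)=e^{r(x)}\mathbb E[e^{\varepsilon(x)}]$ for a reward $r$ and noise field $\varepsilon$, so $Q_{\Delta r}$ corresponds to the perturbed reward $r+\Delta r$, and $p_{\infty,\Delta r}$ is the limit of the purely synthetic retraining dynamics under the perturbed reward. $d_{\rm TV}(p,q)=\frac12\int|p-q|\,d\pi$. *)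

(* Defs.v *)
From HB Require Import structures.
From mathcomp Require Import all_boot all_order all_algebra.
From mathcomp Require Import all_classical all_reals all_analysis.
From mathcomp Require Import ess_sup_inf.
Set Implicit Arguments. Unset Strict Implicit. Unset Printing Implicit Defensive.
Import Order.TTheory GRing.Theory Num.Theory.
Import numFieldNormedType.Exports.
Local Open Scope classical_set_scope.
Local Open Scope ring_scope.

Section defs.
Context {d : measure_display} {T : measurableType d} {R : realType}.
Variable pi : {measure set T -> \bar R}.

Definition P0 (p0 : T -> R) (B : set T) : \bar R := (\int[pi]_(x in B) (p0 x)%:E)%E.

Definition Qpert (Q dr : T -> R) (x : T) : R := Q x * expR (dr x).

Definition Qstar (Q dr : T -> R) : \bar R := ess_sup pi (fun x => (Qpert Q dr x)%:E).

Definition Aset (Q dr : T -> R) : set T := [set x | (Qpert Q dr x)%:E = Qstar Q dr].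

Definition p_inf (p0 Q dr : T -> R) (x : T) : R :=
  p0 x * \1_(Aset Q dr) x / fine (P0 p0 (Aset Q dr)).

Definition Linf_norm (f : T -> R) : \bar R := ess_sup pi (fun x => (`|f x|)%:E).

Definition dTV (p q : T -> R) : \bar R :=
  ((2^-1)%:E * \int[pi]_x (`|p x - q x|)%:E)%E.
End defs.

(* Main.v *)
Require Import Defs.
From HB Require Import structures.
From mathcomp Require Import all_boot all_order all_algebra.
From mathcomp Require Import all_classical all_reals all_analysis.
From mathcomp Require Import ess_sup_inf.
From mathcomp Require Import lra measurable_realfun.
Import Order.TTheory GRing.Theory Num.Theory.
Import numFieldNormedType.Exports.
Local Open Scope classical_set_scope.
Local Open Scope ring_scope.

Lemma ess_sup_lb (d : measure_display) (T : measurableType d) (R : realType)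
  (pi : {measure set T -> \bar R}) (f : T -> \bar R) (S : set T) (a : \bar R) :
  measurable S -> (0 < pi S)%E -> (forall x, S x -> (a <= f x)%E) ->
  (a <= ess_sup pi f)%E.
Proof.
move=> mS pS Sa; rewrite leNgt; apply/negP => H.
have [N [mN N0 sub]] := ess_sup_ge pi f.
have SN : S `<=` N.
  move=> x Sx; apply: sub => /= fle.
  by move: (lt_le_trans H (Sa x Sx)); rewrite ltNge fle.
have := le_measure pi (mem_set mS) (mem_set mN) SN.
move=> h; have : (0 < pi N)%E by exact: lt_le_trans pS h.
by rewrite N0 ltxx.
Qed.

Lemma P0_pos_mu (d : measure_display) (T : measurableType d) (R : realType)
  (pi : {measure set T -> \bar R}) (p0 : T -> R) (S : set T) :
  measurable S -> measurable_fun setT p0 -> (0 < P0 pi p0 S)%E -> (0 < pi S)%E.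
Proof.
move=> mS mp P; rewrite lt0e measure_ge0 andbT; apply/negP => /eqP H.
move: P; rewrite /P0 null_set_integral // ?ltxx //.
by apply/measurable_realfun.measurable_EFinP; exact: measurable_funTS.
Qed.

Lemma P0_bnd (d : measure_display) (T : measurableType d) (R : realType)
  (pi : {measure set T -> \bar R}) (p0 : T -> R) (S : set T) :
  measurable S -> measurable_fun setT p0 -> (forall x, 0 <= p0 x) ->
  (\int[pi]_x (p0 x)%:E = 1)%E -> (0 <= P0 pi p0 S <= 1)%E.
Proof.
move=> mS mp p0ge int1; apply/andP; split.
  by apply: integral_ge0 => x _; rewrite lee_fin.
rewrite -int1; apply: ge0_subset_integral => //.
  exact/measurable_realfun.measurable_EFinP.
by move=> x _; rewrite lee_fin.
Qed.

Lemma int_pinf (d : measure_display) (T : measurableType d) (R : realType)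
  (pi : {measure set T -> \bar R}) (p0 : T -> R) (S : set T) (k : R) :
  measurable S -> measurable_fun setT p0 -> (forall x, 0 <= p0 x) -> 0 < k ->
  P0 pi p0 S = k%:E ->
  (\int[pi]_x (p0 x * \1_S x / k)%:E = 1)%E.
Proof.
move=> mS mp p0ge k0 Pk.
transitivity (\int[pi]_(x in S) ((k^-1)%:E * (p0 x)%:E))%E.
  rewrite [RHS]integral_mkcond; apply: eq_integral => x _; rewrite patchE indicE.
  case: (boolP (x \in S)) => _ /=; rewrite -?EFinM; congr EFin.
    by rewrite mulr1 mulrC.
  by rewrite mulr0 mul0r.
rewrite ge0_integralZl_EFin //.
- by rewrite -/(P0 pi p0 S) Pk -EFinM mulVf ?gt_eqF.
- by move=> x _; rewrite lee_fin.
- apply/measurable_realfun.measurable_EFinP; exact: measurable_funTS.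
- by rewrite ltW // invr_gt0.
Qed.

Arguments ess_sup_lb {d T R pi f S a}.
Arguments P0_pos_mu {d T R} pi {p0 S}.
Arguments P0_bnd {d T R} pi {p0 S}.
Arguments int_pinf {d T R} pi {p0 S k}.

Theorem theorem7 (d : measure_display) (T : measurableType d) (R : realType)
  (pi : {measure set T -> \bar R}) (p0 Q : T -> R) (Qs eta : R) :
  sigma_finite [set: T] pi ->
  measurable_fun [set: T] p0 -> (forall x, 0 <= p0 x) ->
  (\int[pi]_x (p0 x)%:E = 1)%E ->
  measurable_fun [set: T] Q -> (forall x, 0 < Q x) ->
  ess_sup pi (EFin \o Q) = Qs%:E -> 0 < Qs ->
  (forall x, Q x <= Qs) ->
  (0 < P0 pi p0 [set x | Q x = Qs])%E ->
  0 < eta ->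
  (exists delta : R, 0 < delta /\
     (0 < P0 pi p0 [set x | ((Qs - delta <= Q x) && (Q x < Qs))%R])%E /\
     Qs <= (Qs - delta) * expR eta) ->
  exists dr : T -> R,
    measurable_fun [set: T] dr /\
    Linf_norm pi dr = eta%:E /\
    (0 < P0 pi p0 (Aset pi Q dr))%E /\
    dTV pi (p_inf pi p0 Q dr) (p_inf pi p0 Q (fun _ => 0)) = 1%E.
Proof.
move=> _ mp p0ge int1 mQ Qpos esQ Qs0 QleQs PA eta0 [del [del0 [PB Hc]]].
set c := (Qs - del) * expR eta.
set bB := fun x => (Qs - del <= Q x) && (Q x < Qs).
set B := [set x | ((Qs - del <= Q x) && (Q x < Qs))%R].
set A := [set x | Q x = Qs].
have e0 := expR_gt0 eta.
have c0 : 0 < c by exact: lt_le_trans Qs0 Hc.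
have d0 : 0 < Qs - del by rewrite /c in c0; nra.
have mbB : measurable_fun setT bB.
  apply: measurable_and; first exact: measurable_fun_ler.
  exact: measurable_fun_ltr.
have mB : measurable B by rewrite -[B]setTI; apply: (mbB measurableT [set true]).
have mA : measurable A by rewrite -[A]setTI; apply: (mQ measurableT [set Qs]).
have AnB : forall x, A x -> ~~ bB x.
  by move=> x; rewrite /A /bB /= => ->; rewrite ltxx andbF.
have piA := P0_pos_mu pi mA mp PA.
have piB := P0_pos_mu pi mB mp PB.
pose dr x := if bB x then ln c - ln (Q x) else - eta.
have expdrB : forall x, bB x -> expR (dr x) = c / Q x.
  by move=> x bx; rewrite /dr bx expRB !lnK // posrE.
have QdrB : forall x, bB x -> Qpert Q dr x = c.
  by move=> x bx; rewrite /Qpert expdrB // mulrC divfK // gt_eqF.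
have QdrNB : forall x, ~~ bB x -> Qpert Q dr x < c.
  move=> x /negbTE bx; rewrite /Qpert /dr bx.
  have := QleQs x; have := Qpos x.
  have : expR (- eta) < 1 by rewrite expR_lt1 oppr_lt0.
  have := expR_gt0 (- eta).
  move: Hc; rewrite -/c; nra.
have absdr : forall x, `|dr x| <= eta.
  move=> x; rewrite /dr; case: ifP => bx; last by rewrite normrN gtr0_norm.
  move: bx => /andP [h1 h2].
  have Qx0 := Qpos x.
  rewrite ger0_norm.
    rewrite -ler_expR expRB !lnK ?posrE // ler_pdivrMr //.
    by rewrite /c mulrC ler_wpM2l // ltW.
  rewrite subr_ge0 ler_ln ?posrE //.
  by apply: ltW; apply: lt_le_trans Hc; apply: lt_le_trans h2 _.
have mdr : measurable_fun setT dr.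
  apply: measurable_fun_ifT => //.
  apply: measurable_funB => //.
  exact: measurableT_comp.
have Linf : Linf_norm pi dr = eta%:E.
  apply/eqP; rewrite eq_le; apply/andP; split.
    by apply/ess_supP; apply: nearW => x; rewrite lee_fin.
  apply: (ess_sup_lb mA piA) => x Ax.
  by rewrite /dr (negbTE (AnB x Ax)) normrN gtr0_norm.
have Qsdr : Qstar pi Q dr = c%:E.
  apply/eqP; rewrite eq_le; apply/andP; split.
    apply/ess_supP; apply: nearW => x; rewrite lee_fin.
    by case: (boolP (bB x)) => bx; [rewrite QdrB | apply/ltW/QdrNB].
  apply: (ess_sup_lb mB piB) => x Bx.
  by rewrite QdrB.
have AsetB : Aset pi Q dr = B.
  apply/seteqP; split => x; rewrite /Aset /= Qsdr.
    move=> /eqP; rewrite eqe => /eqP h.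
    apply/negbNE/negP => bx; have := QdrNB x bx; by rewrite h ltxx.
  by move=> bx; rewrite QdrB.
have Qs0' : Qstar pi Q (fun _ => 0) = Qs%:E.
  rewrite -esQ /Qstar; congr ess_sup; apply: funext => x.
  by rewrite /Qpert expR0 mulr1.
have Aset0 : Aset pi Q (fun _ => 0) = A.
  apply/seteqP; split => x; rewrite /Aset /= Qs0' /Qpert expR0 mulr1.
    by move=> [].
  by move=> ->.
exists dr; split => //; split => //; split; first by rewrite AsetB.
rewrite /dTV /p_inf AsetB Aset0.
have [pB PBe] : exists pB, P0 pi p0 B = pB%:E.
  have := P0_bnd pi mB mp p0ge int1; case: (P0 pi p0 B) => //.
    by move=> r _; exists r.
  by rewrite leey andbF.
have [pA PAe] : exists pA, P0 pi p0 A = pA%:E.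
  have := P0_bnd pi mA mp p0ge int1; case: (P0 pi p0 A) => //.
    by move=> r _; exists r.
  by rewrite leey andbF.
rewrite PBe PAe /=.
have pB0 : 0 < pB by rewrite -lte_fin -PBe.
have pA0 : 0 < pA by rewrite -lte_fin -PAe.
have mind : forall S : set T, measurable S -> forall k : R,
    measurable_fun setT (fun x => (p0 x * \1_S x / k)%:E).
  move=> S mS k; apply/measurable_EFinP.
  by apply: measurable_funM => //; apply: measurable_funM => //.
have ge0 : forall (S : set T) (k : R), 0 < k -> forall x, (0 <= (p0 x * \1_S x / k)%:E)%E.
  move=> S k k0 x; rewrite lee_fin; apply: divr_ge0; last exact: ltW.
  by apply: mulr_ge0 => //; rewrite indicE.
transitivity ((2^-1)%:E * \int[pi]_x ((p0 x * \1_B x / pB)%:E + (p0 x * \1_A x / pA)%:E))%E.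
  congr (_ * _)%E; apply: eq_integral => x _; rewrite -EFinD; congr EFin.
  rewrite !indicE; case: (boolP (x \in B)) => xB.
    have xA : x \notin A.
      apply/negP => /set_mem Ax; have := AnB x Ax; rewrite /bB.
      by move: xB => /set_mem ->.
    rewrite (negbTE xA) !mulr0 mul0r subr0 addr0 ger0_norm //.
    by rewrite mulr1 divr_ge0 // ltW.
  rewrite !mulr0 mul0r sub0r add0r normrN ger0_norm //.
  by apply: divr_ge0; [apply: mulr_ge0 => //; rewrite indicE | exact: ltW].
rewrite ge0_integralD //; last 4 first.
- by move=> x _; apply: ge0.
- exact: mind.
- by move=> x _; apply: ge0.
- exact: mind.
rewrite (int_pinf pi mB mp p0ge pB0 PBe) (int_pinf pi mA mp p0ge pA0 PAe).
by rewrite -EFinD -EFinM; congr EFin; rewrite -mulr2n -mulr_natr mulVf.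
Qed.
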